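(* Let $(U,\Phi)$ be a complete two-phase quantum walk with an initial state $\Phi\in\mathcal H_0$. Then $(U,\Phi)$ is unitary equivalent to $(U_{r,\sigma},\Phi_{\alpha,\theta})$ for some $0\le r_\varepsilon,\alpha\le1$ ($\varepsilon=+,-$) and $\sigma_i,\theta\in\mathbb R$ ($i=1,2$), where $\Phi_{\alpha,\theta}=\alpha e_1^0+e^{i\theta}\sqrt{1-\alpha^2}\,e_2^0$ and \begin{align*} U_{r,\sigma}={}&\sum_{n\ge0}|e_1^{n-1}\rangle\langle r_+e_1^n+s_+e_2^n|+|e_2^{n+1}\rangle\langle -e^{i\sigma_1}s_+e_1^n+e^{i\sigma_1}r_+e_2^n|\\ &+\sum_{n\le-1}|e_1^{n-1}\rangle\langle r_-e_1^n+e^{i\sigma_2}s_-e_2^n|+|e_2^{n+1}\rangle\langle -s_-e_1^n+e^{i\sigma_2}r_-e_2^n|, \end{align*} with $s_\varepsilon=\sqrt{1-r_\varepsilon^2}$, $r=(r_+,r_-)$, $\sigma=(\sigma_1,\sigma_2)$. Moreover, for $0<r_\varepsilon,r'_\varepsilon,\alpha,\alpha'<1$ and $\sigma_i,\sigma'_i,\theta,\theta'\in[0,2\pi)$, $(U_{r,\sigma},\Phi_{\alpha,\theta})$ and $(U_{r',\sigma'},\Phi_{\alpha',\theta'})$ are unitary equivalent if and only if $r=r'$, $\sigma=\sigma'$, $\alpha=\alpha'$ and $\theta=\theta'$.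
   Context: Let $\mathcal H_n=\mathbb C^2$ for $n\in\mathbb Z$, $\mathcal H=\bigoplus_{n\in\mathbb Z}\mathcal H_n$, $P_n$ the orthogonal projection onto $\mathcal H_n$, and $\{e_1^n,e_2^n\}$ the standard basis of $\mathcal H_n$; each $\mathcal H_n$ is identified with $\mathbb C^2$. Dirac notation: $|x\rangle\langle y|$ is the operator $z\mapsto\langle y,z\rangle x$ (inner product conjugate-linear in the first argument). A one-dimensional quantum walk is a unitary $U$ on $\mathcal H$ with $\operatorname{rank}(P_nUP_m)=1$ if $m=n\pm1$ and $0$ otherwise. Every such $U$ can be written as $U=\sum_{n\in\mathbb Z}|\xi_{n-1,n}\rangle\langle\zeta_{n-1,n}|+|\xi_{n+1,n}\rangle\langle\zeta_{n+1,n}|$, where $\{\xi_{n,n+1},\xi_{n+1,n}\}_{n}$ and $\{\zeta_{n,n+1},\zeta_{n+1,n}\}_{n}$ are orthonormal bases of $\mathcal H$ with $\xi_{n,n+1},\zeta_{n+1,n}\in\mathcal H_n$ and $\xi_{n+1,n},\zeta_{n,n+1}\in\mathcal H_{n+1}$. $U$ is a complete two-phase quantum walk if it has such a representation for which there exist $\xi_1^\pm,\xi_2^\pm,\zeta_1^\pm,\zeta_2^\pm\in\mathbb C^2$ with $\xi_{n,n+1}=\xi_1^+$, $\xi_{n,n-1}=\xi_2^+$, $\zeta_{n-1,n}=\zeta_1^+$, $\zeta_{n+1,n}=\zeta_2^+$ for all $n\ge0$, and the same with superscript $-$ for all $n\le-1$. An initial state is a unit vector $\Phi\in\mathcal H_0$.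 Since a walk $U$ is identified with $e^{i\lambda}U$ and a state $\Phi$ with $e^{i\lambda}\Phi$, pairs $(U,\Phi)$ and $(U',\Phi')$ are called unitary equivalent if there exist $\lambda,\lambda'\in\mathbb R$ and a unitary $W=\bigoplus_nW_n$ ($W_n$ unitary on $\mathcal H_n$) with $e^{i\lambda}WUW^*=U'$ and $e^{i\lambda'}W\Phi=\Phi'$. *)

(* Defs.v *)
From HB Require Import structures.
From mathcomp Require Import all_boot all_order all_algebra.
From mathcomp Require Import complex.
From mathcomp Require Import Rstruct.
From Stdlib Require Import Reals.
Set Implicit Arguments. Unset Strict Implicit. Unset Printing Implicit Defensive.
Import Order.TTheory GRing.Theory Num.Theory.

Local Open Scope ring_scope.
Local Open Scope complex_scope.

Definition C : Type := (Rdefinitions.R)[i].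
Definition RtoC (x : Rdefinitions.R) : C := x%:C.
Definition expi (t : Rdefinitions.R) : C := (Rtrigo_def.cos t) +i* (Rtrigo_def.sin t).

(* H_n = C^2, vectors as column vectors *)
Definition vec := 'cV[C]_2.
Definition e1 : vec := \col_(i < 2) (if i == ord0 then 1 else 0).
Definition e2 : vec := \col_(i < 2) (if i == ord0 then 0 else 1).

Definition inner (x y : vec) : C := \sum_(i < 2) (x i ord0)^* * y i ord0.
Definition adjm (m n : nat) (A : 'M[C]_(m, n)) : 'M[C]_(n, m) := (map_mx conjc A)^T.
Definition ketbra (x y : vec) : 'M[C]_2 := x *m adjm y.

Definition orthonormal2 (x y : vec) : Prop :=
  inner x x = 1 /\ inner y y = 1 /\ inner x y = 0.

(* An operator on H = (+)_{n in Z} H_n, represented by its block kernel: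
   U n m = P_n U P_m viewed as a 2x2 matrix H_m -> H_n in the standard bases. *)
Definition kernel := int -> int -> 'M[C]_2.

Definition banded_walk (U : kernel) : Prop :=
  forall n m : int, \rank (U n m) = (if (m == n + 1) || (m == n - 1) then 1 else 0)%N.

Definition window_sum (n : int) (F : int -> 'M[C]_2) : 'M[C]_2 :=
  \sum_(i < 3) F (n - 1 + (nat_of_ord i)%:Z).

(* For a kernel with the band structure above, U^*U = 1 and UU^* = 1
   (the sums over k defining the products reduce to k = n-1, n+1). *)
Definition unitary_banded (U : kernel) : Prop :=
  forall n m : int,
    window_sum n (fun k => adjm (U k n) *m U k m) = (if n == m then 1%:M else 0)
 /\ window_sum n (fun k => U n k *m adjm (U m k)) = (if n == m then 1%:M else 0).

Definition quantum_walk (U : kernel) : Prop := banded_walk U /\ unitary_banded U.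

Definition pick (n : int) (p q : vec) : vec := if 0 <= n then p else q.

(* the kernel of  sum_n |xi_{n-1,n}><zeta_{n-1,n}| + |xi_{n+1,n}><zeta_{n+1,n}|
   with xi_{n,n+1} = xi1^+, xi_{n,n-1} = xi2^+, zeta_{n-1,n} = zeta1^+,
   zeta_{n+1,n} = zeta2^+ for n >= 0, and superscript - for n <= -1. *)
Definition two_phase_kernel (xi1p xi2p xi1m xi2m ze1p ze2p ze1m ze2m : vec) : kernel :=
  fun n m =>
    (if n == m - 1 then ketbra (pick n xi1p xi1m) (pick m ze1p ze1m) else 0)
  + (if n == m + 1 then ketbra (pick n xi2p xi2m) (pick m ze2p ze2m) else 0).

Definition complete_two_phase (U : kernel) : Prop :=
  quantum_walk U /\
  exists xi1p xi2p xi1m xi2m ze1p ze2p ze1m ze2m : vec,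
    orthonormal2 xi1p xi2p /\ orthonormal2 xi1m xi2m /\
    orthonormal2 ze1p ze2p /\ orthonormal2 ze1m ze2m /\
    (forall n m, U n m = two_phase_kernel xi1p xi2p xi1m xi2m ze1p ze2p ze1m ze2m n m).

(* initial state: unit vector of H_0 *)
Definition initial_state (Phi : vec) : Prop := inner Phi Phi = 1.

Definition unitary_equiv (U : kernel) (Phi : vec) (U' : kernel) (Phi' : vec) : Prop :=
  exists (l l' : Rdefinitions.R) (W : int -> 'M[C]_2),
    (forall n, adjm (W n) *m W n = 1%:M /\ W n *m adjm (W n) = 1%:M) /\
    (forall n m, expi l *: (W n *m U n m *m adjm (W m)) = U' n m) /\
    expi l' *: (W 0 *m Phi) = Phi'.

Definition sqrt1m (r : Rdefinitions.R) : Rdefinitions.R := R_sqrt.sqrt (1 - r * r)%R.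

Definition Uzeta1 (rp rm s2 : Rdefinitions.R) (m : int) : vec :=
  if 0 <= m then RtoC rp *: e1 + RtoC (sqrt1m rp) *: e2
  else RtoC rm *: e1 + (expi s2 * RtoC (sqrt1m rm)) *: e2.
Definition Uzeta2 (rp rm s1 s2 : Rdefinitions.R) (m : int) : vec :=
  if 0 <= m then (- (expi s1 * RtoC (sqrt1m rp))) *: e1 + (expi s1 * RtoC rp) *: e2
  else (- RtoC (sqrt1m rm)) *: e1 + (expi s2 * RtoC rm) *: e2.
Definition U_rs (rp rm s1 s2 : Rdefinitions.R) : kernel :=
  fun n m =>
    (if n == m - 1 then ketbra e1 (Uzeta1 rp rm s2 m) else 0)
  + (if n == m + 1 then ketbra e2 (Uzeta2 rp rm s1 s2 m) else 0).

Definition Phi_at (a t : Rdefinitions.R) : vec :=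
  RtoC a *: e1 + (expi t * RtoC (sqrt1m a)) *: e2.

(* Main.v *)
Require Import Defs.
From HB Require Import structures.
From mathcomp Require Import all_boot all_order all_algebra.
From mathcomp Require Import complex.
From mathcomp Require Import Rstruct.
From Stdlib Require Import Reals.
From Stdlib Require Import Lra Lia.
From mathcomp Require Import ring zify.
Set Implicit Arguments. Unset Strict Implicit. Unset Printing Implicit Defensive.
Import Order.TTheory GRing.Theory Num.Theory.
Local Open Scope ring_scope.
Notation CC := (Defs.C).

Lemma conjcE (x : CC) : conjc x = x^*. Proof. reflexivity. Qed.
Lemma cjR (x : R) : (RtoC x)^* = RtoC x. Proof. exact: conjc_real. Qed.

Lemma ord2P (i : 'I_2) : i = ord0 \/ i = ord_max.
Proof. case: i => [[|[|k]] Hk]; [left|right|by []]; exact: val_inj. Qed.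

Lemma sum2 (F : 'I_2 -> CC) : \sum_(i < 2) F i = F ord0 + F ord_max.
Proof. rewrite !big_ord_recl big_ord0 addr0; congr (_ + F _); exact: val_inj. Qed.

Lemma vecP2 (x y : vec) : x ord0 ord0 = y ord0 ord0 -> x ord_max ord0 = y ord_max ord0 -> x = y.
Proof.
move=> H0 H1; apply/matrixP => i j; rewrite (ord1 j).
by case: (ord2P i) => ->.
Qed.

Lemma mxP2 (A B : 'M[CC]_2) : A ord0 ord0 = B ord0 ord0 -> A ord0 ord_max = B ord0 ord_max ->
  A ord_max ord0 = B ord_max ord0 -> A ord_max ord_max = B ord_max ord_max -> A = B.
Proof.
move=> H00 H01 H10 H11; apply/matrixP => i j.
by case: (ord2P i) => ->; case: (ord2P j) => ->.
Qed.

Lemma mulE2 m p (A : 'M[CC]_(m, 2)) (B : 'M[CC]_(2, p)) i j :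
  (A *m B) i j = A i ord0 * B ord0 j + A i ord_max * B ord_max j.
Proof. by rewrite mxE sum2. Qed.

Lemma adjmE m n (A : 'M[CC]_(m, n)) i j : adjm A i j = (A j i)^*.
Proof. by rewrite /adjm !mxE. Qed.

Lemma innerE (x y : vec) : inner x y = (x ord0 ord0)^* * y ord0 ord0 + (x ord_max ord0)^* * y ord_max ord0.
Proof. by rewrite /inner sum2. Qed.

Lemma inner_mx (x y : vec) : inner x y = (adjm x *m y) ord0 ord0.
Proof. by rewrite innerE mulE2 !adjmE. Qed.

Lemma adjmM m n p (A : 'M[CC]_(m, n)) (B : 'M[CC]_(n, p)) : adjm (A *m B) = adjm B *m adjm A.
Proof. by rewrite /adjm map_mxM trmx_mul. Qed.

Lemma adjmK m n (A : 'M[CC]_(m, n)) : adjm (adjm A) = A.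
Proof. apply/matrixP => i j; by rewrite !adjmE conjCK. Qed.

Lemma ketbraE (x y : vec) i j : ketbra x y i j = x i ord0 * (y j ord0)^*.
Proof. by rewrite /ketbra mxE big_ord1 adjmE. Qed.

Lemma ketbra_conj (W V : 'M[CC]_2) (x y : vec) :
  W *m ketbra x y *m adjm V = ketbra (W *m x) (V *m y).
Proof. by rewrite /ketbra adjmM !mulmxA. Qed.

Lemma ketbraZl (c : CC) (x y : vec) : ketbra (c *: x) y = ketbra x (c^* *: y).
Proof. by apply/matrixP => i j; rewrite !ketbraE !mxE rmorphM /= conjCK mulrCA mulrA. Qed.

Lemma scale_ketbra (c : CC) (x y : vec) : c *: ketbra x y = ketbra (c *: x) y.
Proof. by rewrite /ketbra scalemxAl. Qed.

Definition un (c : CC) := c * c^* = 1.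

Definition Wc (c0 c1 : CC) (x1 x2 : vec) : 'M[CC]_2 :=
  \matrix_(i, j) (if i == ord0 then c0 * (x1 j ord0)^* else c1 * (x2 j ord0)^*).

Lemma Wc_v0 c0 c1 x1 x2 v : (Wc c0 c1 x1 x2 *m v) ord0 ord0 = c0 * inner x1 v.
Proof. by rewrite mulE2 !mxE innerE /=; ring. Qed.

Lemma Wc_v1 c0 c1 x1 x2 v : (Wc c0 c1 x1 x2 *m v) ord_max ord0 = c1 * inner x2 v.
Proof. by rewrite mulE2 !mxE innerE /=; ring. Qed.

Lemma inner_sym (x y : vec) : inner y x = (inner x y)^*.
Proof. by rewrite !innerE rmorphD !rmorphM /= !conjCK mulrC [X in _ + X]mulrC. Qed.

Lemma Wc_unitary c0 c1 x1 x2 : orthonormal2 x1 x2 -> un c0 -> un c1 ->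
  Wc c0 c1 x1 x2 *m adjm (Wc c0 c1 x1 x2) = 1%:M /\ adjm (Wc c0 c1 x1 x2) *m Wc c0 c1 x1 x2 = 1%:M.
Proof.
move=> [H11 [H22 H12]] u0 u1.
have H21 : inner x2 x1 = 0 by rewrite inner_sym H12 rmorph0.
move: H11 H22 H12 H21; rewrite !innerE => H11 H22 H12 H21.
have E : Wc c0 c1 x1 x2 *m adjm (Wc c0 c1 x1 x2) = 1%:M.
  apply: mxP2; rewrite mulE2 !adjmE !mxE /= !rmorphM /= !conjCK.
  - rewrite -[RHS]u0 -[RHS]mulr1 -H11; ring.
  - rewrite -[RHS](mulr0 (c0 * c1^*)) -H12; ring.
  - rewrite -[RHS](mulr0 (c1 * c0^*)) -H21; ring.
  - rewrite -[RHS]u1 -[RHS]mulr1 -H22; ring.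
by split => //; apply: mulmx1C.
Qed.


Lemma complexP (a b c d : R) : a = c -> b = d -> (a +i* b)%C = (c +i* d)%C :> CC.
Proof. by move=> -> ->. Qed.

Lemma expiD x y : expi (x + y) = expi x * expi y.
Proof.
rewrite /expi /GRing.mul /=; apply: complexP; first by rewrite cosD.
by rewrite sinD; ring.
Qed.

Lemma un_complex (a b : R) : un (a +i* b)%C -> a * a + b * b = 1.
Proof.
rewrite /un -conjcE /= /GRing.mul /= => -[] H _; rewrite -H ?RmultE ?RplusE; ring.
Qed.

Lemma un_expi t : un (expi t).
Proof.
rewrite /un /expi -conjcE /= /GRing.mul /=; apply: complexP.
  have H2 : (sin t * sin t + cos t * cos t = 1)%R := sin2_cos2 t.
  transitivity (sin t * sin t + cos t * cos t)%R; last exact: H2.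
  rewrite ?RplusE ?RmultE; ring.
ring.
Qed.

Lemma arg_exists (z : CC) : un z -> exists t, expi t = z.
Proof.
case: z => a b /un_complex H.
have H' : (a * a + b * b = 1)%R by exact: H.
have Ha : (-1 <= a <= 1)%R by nra.
have E : (1 - a² = b²)%R by rewrite /Rsqr; lra.
case: (Rle_dec 0 b) => Hb.
  exists (acos a); rewrite /expi cos_acos // sin_acos // E sqrt_Rsqr //.
exists (- acos a)%R; rewrite /expi cos_neg sin_neg cos_acos // sin_acos // E.
rewrite sqrt_Rsqr_abs Rabs_left; last lra.
by rewrite Ropp_involutive.
Qed.

Lemma expi_inj x y : (0 <= x < 2 * PI)%R -> (0 <= y < 2 * PI)%R -> expi x = expi y -> x = y.
Proof.
move=> Hx Hy; rewrite /expi => -[Hc Hs].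
have Cd : cos (x - y) = 1%R.
  rewrite cos_minus Hc Hs. have := sin2_cos2 y; rewrite /Rsqr; lra.
have Sd : sin (x - y) = 0%R by rewrite sin_minus Hc Hs; lra.
have [k Hk] := sin_eq_0_0 _ Sd.
have Hpi := PI_RGT_0.
have Hk1 : (IZR k < 2)%R.
  apply: (Rmult_lt_reg_r PI) => //; rewrite -Hk; lra.
have Hk2 : (-2 < IZR k)%R.
  apply: (Rmult_lt_reg_r PI) => //; rewrite -Hk; lra.
have Hk1' := lt_IZR _ _ Hk1; have Hk2' := lt_IZR _ _ Hk2.
have : (k = -1 \/ k = 0 \/ k = 1)%Z by lia.
case=> [Ek|[Ek|Ek]]; rewrite Ek in Hk.
- move: Cd; rewrite Hk; rewrite (_ : (IZR (-1) * PI = - PI)%R); last lra.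
  rewrite cos_neg cos_PI; lra.
- lra.
- move: Cd; rewrite Hk Rmult_1_l cos_PI; lra.
Qed.


Lemma RtoCM (x y : R) : RtoC (x * y) = RtoC x * RtoC y.
Proof. exact: rmorphM. Qed.
Lemma RtoCD (x y : R) : RtoC (x + y) = RtoC x + RtoC y.
Proof. exact: rmorphD. Qed.
Lemma RtoC1 : RtoC 1 = 1. Proof. exact: rmorph1. Qed.
Lemma RtoC0 : RtoC 0 = 0. Proof. exact: rmorph0. Qed.
Lemma RtoC_inj (x y : R) : RtoC x = RtoC y -> x = y.
Proof. exact: complexI. Qed.

Lemma phase_dec (z : CC) : exists (r : R) (P : CC),
  (0 <= r)%R /\ un P /\ z = RtoC r * P /\ z^* * z = RtoC (r * r).
Proof.
exists ((complex.Re `|z|)).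
have NE : `|z| = RtoC ((complex.Re `|z|)) by [].
have r0 : (0 <= (complex.Re `|z|))%R.
  apply/RleP; rewrite -lecR; exact: normr_ge0 z.
have Hzz : z^* * z = RtoC ((complex.Re `|z|) * (complex.Re `|z|)) by rewrite RtoCM -NE -normCKC expr2.
case: (eqVneq z 0) => [Ez|nz].
  exists 1; split; first exact: r0.
  split; first by rewrite /un conjC1 mulr1.
  by split; [rewrite mulr1 -NE Ez normr0 | exact: Hzz].
exists (z / `|z|); split; first exact: r0.
split.
  rewrite /un rmorphM /= fmorphV /= conj_normC.
  have nn : `|z| != 0 by rewrite normr_eq0.
  rewrite mulrACA -normCK expr2; field; exact: nn.
have nn : `|z| != 0 by rewrite normr_eq0.
split=> //; rewrite -NE; field; exact: nn.
Qed.

Lemma u2_struct (p q u v : CC) : p^* * p + q^* * q = 1 -> p^* * u + q^* * v = 0 ->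
  u^* * u + v^* * v = 1 ->
  un (p * v - q * u) /\ u = - (p * v - q * u) * q^* /\ v = (p * v - q * u) * p^*.
Proof.
move=> H1 H2 H3.
have Hu : u = - (p * v - q * u) * q^*.
  apply/eqP; rewrite -subr_eq0; apply/eqP.
  transitivity (u * (1 - (p^* * p + q^* * q)) + p * (p^* * u + q^* * v)); first ring.
  by rewrite H1 H2; ring.
have Hv : v = (p * v - q * u) * p^*.
  apply/eqP; rewrite -subr_eq0; apply/eqP.
  transitivity (v * (1 - (p^* * p + q^* * q)) + q * (p^* * u + q^* * v)); first ring.
  by rewrite H1 H2; ring.
split=> //.
move: Hu Hv H3; move: (p * v - q * u) => k Hu Hv H3.
rewrite /un -H3 Hu Hv !rmorphM !rmorphN /= !conjCK.
transitivity (k * k^* * (p^* * p + q^* * q)); first by rewrite H1 mulr1.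
ring.
Qed.

Lemma un_neq0 c : un c -> c != 0.
Proof. by move=> H; apply/eqP => c0; move: H; rewrite /un c0 mul0r => /eqP; rewrite eq_sym oner_eq0. Qed.

Lemma un_conj c : un c -> c^* = c^-1.
Proof. move=> H; have nz := un_neq0 H; apply: (mulfI nz); by rewrite H divff. Qed.

Lemma un_mul c d : un c -> un d -> un (c * d).
Proof. by rewrite /un rmorphM /= => Hc Hd; rewrite mulrACA Hc Hd mulr1. Qed.

Lemma un_inv c : un c -> un c^-1.
Proof. move=> H; rewrite /un fmorphV /= un_conj // invrK mulrC divff //; exact: un_neq0. Qed.

Lemma un1 : un 1. Proof. by rewrite /un conjC1 mulr1. Qed.

Lemma un_expz c (z : int) : un c -> un (c ^ z).
Proof.
move=> H; have nz := un_neq0 H.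
rewrite /un rmorphXz /=; last by rewrite unitfE.
by rewrite -expfzMl H exp1rz.
Qed.

Definition aseq (mu nu : CC) (n : int) : CC := if 0 <= n then mu ^ (n + 1) else nu ^ (n + 1).

Lemma aseq_pos (mu nu : CC) (n : int) : mu != 0 -> 0 <= n -> aseq mu nu n = mu * aseq mu nu (n - 1).
Proof.
move=> nz n0; rewrite /aseq n0.
have [->|np] : n = 0 \/ 0 < n by lia.
  by rewrite /= mulr1.
have -> : 0 <= n - 1 by lia.
by rewrite subrK expfzDr // expr1z mulrC.
Qed.

Lemma aseq_neg (mu nu : CC) (n : int) : nu != 0 -> n < 0 -> aseq mu nu n = nu * aseq mu nu (n - 1).
Proof.
move=> nz n0; rewrite /aseq.
have -> : (0 <= n) = false by lia.
have -> : (0 <= n - 1) = false by lia.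
by rewrite subrK expfzDr // expr1z mulrC.
Qed.

Lemma un_aseq (mu nu : CC) (n : int) : un mu -> un nu -> un (aseq mu nu n).
Proof. by move=> H1 H2; rewrite /aseq; case: ifP => _; apply: un_expz. Qed.

Lemma iso_inner (A : 'M[CC]_2) (x y : vec) : adjm A *m A = 1%:M -> inner (A *m x) (A *m y) = inner x y.
Proof. by move=> H; rewrite !inner_mx adjmM -mulmxA (mulmxA (adjm A)) H mul1mx. Qed.

Lemma coords (x1 x2 z1 z2 : vec) : orthonormal2 x1 x2 -> orthonormal2 z1 z2 ->
  (inner x1 z1)^* * inner x1 z1 + (inner x2 z1)^* * inner x2 z1 = 1 /\
  (inner x1 z1)^* * inner x1 z2 + (inner x2 z1)^* * inner x2 z2 = 0 /\
  (inner x1 z2)^* * inner x1 z2 + (inner x2 z2)^* * inner x2 z2 = 1.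
Proof.
move=> Hx [H11 [H22 H12]].
have [_ HA] := Wc_unitary Hx un1 un1.
have E : forall x y, inner x y = (inner x1 x)^* * inner x1 y + (inner x2 x)^* * inner x2 y.
  move=> x y; rewrite -(iso_inner x y HA) innerE Wc_v0 Wc_v1 Wc_v0 Wc_v1 !mul1r //.
by rewrite -!E.
Qed.

Lemma mod_pair (r s : R) : (0 <= r)%R -> (0 <= s)%R -> RtoC (r * r) + RtoC (s * s) = 1 ->
  (0 <= r <= 1)%R /\ sqrt1m r = s.
Proof.
move=> r0 s0; rewrite -RtoCD -RtoC1 => /RtoC_inj H.
have H' : (r * r + s * s = 1)%R by exact: H.
split; first nra.
rewrite /sqrt1m (_ : (1 - r * r = s * s)%R); last lra.
exact: sqrt_square.
Qed.

Lemma sign_data (x1 x2 z1 z2 : vec) : orthonormal2 x1 x2 -> orthonormal2 z1 z2 ->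
  exists (r s : R) (P Q k : CC), (0 <= r <= 1)%R /\ sqrt1m r = s /\ un P /\ un Q /\ un k /\
  inner x1 z1 = RtoC r * P /\ inner x2 z1 = RtoC s * Q /\
  inner x1 z2 = - k * RtoC s * Q^-1 /\ inner x2 z2 = k * RtoC r * P^-1.
Proof.
move=> Hx Hz; have [H1 [H2 H3]] := coords Hx Hz.
have [r [P [r0 [uP [Ep Hp]]]]] := phase_dec (inner x1 z1).
have [s [Q [s0 [uQ [Eq Hq]]]]] := phase_dec (inner x2 z1).
have [uk [Eu Ev]] := u2_struct H1 H2 H3.
have [Hr Hs] : (0 <= r <= 1)%R /\ sqrt1m r = s by apply: mod_pair => //; rewrite -Hp -Hq.
exists r, s, P, Q, (inner x1 z1 * inner x2 z2 - inner x2 z1 * inner x1 z2).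
do 5 (split => //).
split=> //; split=> //; split.
  rewrite {1}Eu Eq rmorphM /= cjR un_conj //; ring.
rewrite {1}Ev; rewrite Ep rmorphM /= cjR un_conj //; ring.
Qed.

Lemma un_sq (c x : CC) : un c -> (c * x)^* * (c * x) = x^* * x.
Proof.
move=> H; rewrite rmorphM /=.
by transitivity (c * c^* * (x^* * x)); [ring | rewrite H mul1r].
Qed.


Lemma W_xi1 c0 c1 (x1 x2 : vec) : orthonormal2 x1 x2 -> Wc c0 c1 x1 x2 *m x1 = c0 *: e1.
Proof.
move=> [H11 [H22 H12]]; have H21 : inner x2 x1 = 0 by rewrite inner_sym H12 rmorph0.
by apply: vecP2; rewrite ?Wc_v0 ?Wc_v1 !mxE /= ?H11 ?H21 ?mulr1 ?mulr0.
Qed.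

Lemma W_xi2 c0 c1 (x1 x2 : vec) : orthonormal2 x1 x2 -> Wc c0 c1 x1 x2 *m x2 = c1 *: e2.
Proof.
move=> [H11 [H22 H12]].
by apply: vecP2; rewrite ?Wc_v0 ?Wc_v1 !mxE /= ?H22 ?H12 ?mulr1 ?mulr0.
Qed.

Definition bsq (rho E2 Qp Qm : CC) (a : int -> CC) (n : int) :=
  if 0 <= n then rho * a (n - 1) * Qp^-1 else E2 * rho * a (n - 1) * Qm^-1.

Definition Wn (rho Pp Qp Pm Qm E2 : CC) (xi1p xi2p xi1m xi2m : vec) (n : int) :=
  Wc (aseq (rho * Pp^-1) (rho * Pm^-1) n)
     (bsq rho E2 Qp Qm (aseq (rho * Pp^-1) (rho * Pm^-1)) n)
     (Defs.pick n xi1p xi1m) (Defs.pick n xi2p xi2m).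

Lemma un_bseq (rho E2 Qp Qm : CC) (a : int -> CC) (n : int) : un rho -> un E2 -> un Qp -> un Qm -> (forall k, un (a k)) ->
  un (bsq rho E2 Qp Qm a n).
Proof.
move=> *; rewrite /bsq; case: ifP => _; repeat apply: un_mul => //; exact: un_inv.
Qed.

Lemma e1E0 : e1 ord0 ord0 = 1. Proof. by rewrite mxE. Qed.
Lemma e1E1 : e1 ord_max ord0 = 0. Proof. by rewrite mxE. Qed.
Lemma e2E0 : e2 ord0 ord0 = 0. Proof. by rewrite mxE. Qed.
Lemma e2E1 : e2 ord_max ord0 = 1. Proof. by rewrite mxE. Qed.

Lemma scaleE (c : CC) (v : vec) i j : (c *: v) i j = c * v i j.
Proof. by rewrite mxE. Qed.
Lemma comb0 (c d : CC) : (c *: e1 + d *: e2) ord0 ord0 = c.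
Proof. by rewrite !mxE /= mulr1 mulr0 addr0. Qed.
Lemma comb1 (c d : CC) : (c *: e1 + d *: e2) ord_max ord0 = d.
Proof. by rewrite !mxE /= mulr1 mulr0 add0r. Qed.

Lemma pick_on (n : int) (x1 x2 y1 y2 : vec) : orthonormal2 x1 x2 -> orthonormal2 y1 y2 ->
  orthonormal2 (Defs.pick n x1 y1) (Defs.pick n x2 y2).
Proof. by rewrite /Defs.pick; case: ifP. Qed.

Lemma kernel_eq (xi1p xi2p xi1m xi2m ze1p ze2p ze1m ze2m : vec) (rp sp rm sm : R)
  (Pp Qp kp Pm Qm km : CC) (lam s1 s2 : R) :
  orthonormal2 xi1p xi2p -> orthonormal2 xi1m xi2m ->
  un Pp -> un Qp -> un kp -> un Pm -> un Qm -> un km ->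
  sqrt1m rp = sp -> sqrt1m rm = sm ->
  inner xi1p ze1p = RtoC rp * Pp -> inner xi2p ze1p = RtoC sp * Qp ->
  inner xi1p ze2p = - kp * RtoC sp * Qp^-1 -> inner xi2p ze2p = kp * RtoC rp * Pp^-1 ->
  inner xi1m ze1m = RtoC rm * Pm -> inner xi2m ze1m = RtoC sm * Qm ->
  inner xi1m ze2m = - km * RtoC sm * Qm^-1 -> inner xi2m ze2m = km * RtoC rm * Pm^-1 ->
  expi lam * expi lam = km * Qm^-1 * Qp ->
  expi s1 = kp / (expi lam * expi lam) -> expi s2 = Qm * Qp^-1 ->
  forall n m, expi lam *: (Wn (expi lam) Pp Qp Pm Qm (expi s2) xi1p xi2p xi1m xi2m n
     *m two_phase_kernel xi1p xi2p xi1m xi2m ze1p ze2p ze1m ze2m n m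
     *m adjm (Wn (expi lam) Pp Qp Pm Qm (expi s2) xi1p xi2p xi1m xi2m m)) = U_rs rp rm s1 s2 n m.
Proof.
move=> Hxp Hxm uPp uQp ukp uPm uQm ukm Hsp Hsm Ep1 Eq1 Eu1 Ev1 Em1 Fm1 Gm1 Hm1 Hrho HE1 HE2.
set rho := expi lam in Hrho HE1 *; set E2 := expi s2.
set a := aseq (rho * Pp^-1) (rho * Pm^-1); set b := bsq rho E2 Qp Qm a.
have urho : un rho := un_expi lam.
have uE2 : un E2 := un_expi s2.
have ua : forall k, un (a k) by move=> k; apply: un_aseq; apply: un_mul => //; apply: un_inv.
have ub : forall k, un (b k) by move=> k; apply: un_bseq.
have Hap : forall k, 0 <= k -> a k = rho * Pp^-1 * a (k - 1).
  move=> k k0; apply: aseq_pos => //; apply: un_neq0; apply: un_mul => //; exact: un_inv.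
have Han : forall k, k < 0 -> a k = rho * Pm^-1 * a (k - 1).
  move=> k k0; apply: aseq_neg => //; apply: un_neq0; apply: un_mul => //; exact: un_inv.
have Hxi := pick_on _ Hxp Hxm.
have nza : forall k, a k != 0 := fun k => un_neq0 (ua k).
have nzb : forall k, b k != 0 := fun k => un_neq0 (ub k).
have nzr := un_neq0 urho; have nzE := un_neq0 uE2.
have nzPp := un_neq0 uPp; have nzQp := un_neq0 uQp; have nzkp := un_neq0 ukp.
have nzPm := un_neq0 uPm; have nzQm := un_neq0 uQm; have nzkm := un_neq0 ukm.
have ltm : forall k : int, (0 <= k) = false -> k < 0 by move=> k H; lia.
have Hbp : forall k, 0 <= k -> b (k + 1) = rho * a k * Qp^-1.
  move=> k k0; rewrite /b /bsq addrK.
  by have -> : 0 <= k + 1 by lia.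
have Hbn : forall k, k < 0 -> rho * b (k + 1) = a k * km * Qm^-1.
  move=> k k0; rewrite /b /bsq addrK.
  case: (boolP (0 <= k + 1)) => k1.
    have -> : k = -1 by lia.
    rewrite !mulrA Hrho; field; by rewrite ?nza ?nzb ?nzr ?nzE ?nzPp ?nzQp ?nzkp ?nzPm ?nzQm ?nzkm.
  rewrite /E2 HE2.
  transitivity ((rho * rho) * (Qm / Qp) * a k * Qm^-1); first ring.
  rewrite Hrho; field; by rewrite ?nza ?nzb ?nzr ?nzE ?nzPp ?nzQp ?nzkp ?nzPm ?nzQm ?nzkm.
move=> n m; rewrite /two_phase_kernel /U_rs.
case: (eqVneq n (m - 1)) => [En|Nn]; case: (eqVneq n (m + 1)) => [Fn|Nf] /=.
- exfalso; move: En; rewrite Fn; lia.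
- rewrite !addr0 ketbra_conj scale_ketbra /Wn -/a -/b W_xi1 // scalerA ketbraZl.
  congr (ketbra e1 _); rewrite En /Uzeta1 /Defs.pick.
  case: ifP => m0; apply: vecP2; rewrite scaleE ?Wc_v0 ?Wc_v1 ?comb0 ?comb1.
  + rewrite Ep1 (Hap m m0) rmorphM /= !un_conj //; field; by rewrite ?nza ?nzb ?nzr ?nzE ?nzPp ?nzQp ?nzkp ?nzPm ?nzQm ?nzkm.
  + rewrite Eq1 -Hsp /b /bsq m0 rmorphM /= !un_conj //; field; by rewrite ?nza ?nzb ?nzr ?nzE ?nzPp ?nzQp ?nzkp ?nzPm ?nzQm ?nzkm.
  + rewrite Em1 (Han m (ltm _ m0)) rmorphM /= !un_conj //; field; by rewrite ?nza ?nzb ?nzr ?nzE ?nzPp ?nzQp ?nzkp ?nzPm ?nzQm ?nzkm.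
  + rewrite Fm1 -Hsm /b /bsq m0 rmorphM /= !un_conj //; rewrite /E2; field; by rewrite ?nza ?nzb ?nzr ?nzE ?nzPp ?nzQp ?nzkp ?nzPm ?nzQm ?nzkm.
- rewrite !add0r ketbra_conj scale_ketbra /Wn -/a -/b W_xi2 // scalerA ketbraZl.
  congr (ketbra e2 _); rewrite Fn /Uzeta2 /Defs.pick.
  case: ifP => m0; apply: vecP2; rewrite scaleE ?Wc_v0 ?Wc_v1 ?comb0 ?comb1.
  + rewrite Eu1 -Hsp (un_conj (un_mul urho (ub _))) (Hbp m m0) HE1; field; by rewrite ?nza ?nzb ?nzr ?nzE ?nzPp ?nzQp ?nzkp ?nzPm ?nzQm ?nzkm.
  + rewrite Ev1 (un_conj (un_mul urho (ub _))) (Hbp m m0) HE1 (Hap m m0) /b /bsq m0; field; by rewrite ?nza ?nzb ?nzr ?nzE ?nzPp ?nzQp ?nzkp ?nzPm ?nzQm ?nzkm.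
  + rewrite Gm1 -Hsm (un_conj (un_mul urho (ub _))) (Hbn m (ltm _ m0)); field; by rewrite ?nza ?nzb ?nzr ?nzE ?nzPp ?nzQp ?nzkp ?nzPm ?nzQm ?nzkm.
  + rewrite Hm1 (un_conj (un_mul urho (ub _))) (Hbn m (ltm _ m0)) (Han m (ltm _ m0)).
    rewrite /b /bsq m0 /E2; field; by rewrite ?nza ?nzb ?nzr ?nzE ?nzPp ?nzQp ?nzkp ?nzPm ?nzQm ?nzkm.
- by rewrite !addr0 mulmx0 mul0mx scaler0.
Qed.


Lemma part1 : forall (U : kernel) (Phi : vec),
     complete_two_phase U -> initial_state Phi ->
     exists rp rm a s1 s2 t : R,
       (0 <= rp <= 1)%R /\ (0 <= rm <= 1)%R /\ (0 <= a <= 1)%R /\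
       unitary_equiv U Phi (U_rs rp rm s1 s2) (Phi_at a t).
Proof.
move=> U Phi [_ [xi1p [xi2p [xi1m [xi2m [ze1p [ze2p [ze1m [ze2m [Hxp [Hxm [Hzp [Hzm HU]]]]]]]]]]]]] HPhi.
have [rp [sp [Pp [Qp [kp [Hrp [Hsp [uPp [uQp [ukp [Ep1 [Eq1 [Eu1 Ev1]]]]]]]]]]]]] := sign_data Hxp Hzp.
have [rm [sm [Pm [Qm [km [Hrm [Hsm [uPm [uQm [ukm [Em1 [Fm1 [Gm1 Hm1]]]]]]]]]]]]] := sign_data Hxm Hzm.
have [th Hth] := arg_exists (un_mul (un_mul ukm (un_inv uQm)) uQp).
pose lam := (th / 2)%R.
have Hrho : expi lam * expi lam = km * Qm^-1 * Qp.
  have E : (lam + lam = th)%R by rewrite /lam; lra.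
  by rewrite -expiD -Hth; congr expi; exact: E.
have [s2 HE2] := arg_exists (un_mul uQm (un_inv uQp)).
have [s1 HE1] := arg_exists (un_mul ukp (un_inv (un_mul (un_expi lam) (un_expi lam)))).
have KE := kernel_eq Hxp Hxm uPp uQp ukp uPm uQm ukm Hsp Hsm Ep1 Eq1 Eu1 Ev1 Em1 Fm1 Gm1 Hm1 Hrho HE1 HE2.
set rho := expi lam in Hrho HE1 KE *.
set W := Wn rho Pp Qp Pm Qm (expi s2) xi1p xi2p xi1m xi2m in KE *.
pose a := aseq (rho * Pp^-1) (rho * Pm^-1).
pose b := bsq rho (expi s2) Qp Qm a.
have urho : un rho := un_expi lam.
have ua : forall k, un (a k) by move=> k; apply: un_aseq; apply: un_mul => //; apply: un_inv.
have ub : forall k, un (b k) by move=> k; apply: un_bseq => //; apply: un_expi.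
have WU : forall n, W n *m adjm (W n) = 1%:M /\ adjm (W n) *m W n = 1%:M.
  move=> n; apply: Wc_unitary => //; exact: pick_on.
have W0 : W 0 = Wc (a 0) (b 0) xi1p xi2p by rewrite /W /Wn /Defs.pick lexx.
have Hphi : (inner xi1p Phi)^* * inner xi1p Phi + (inner xi2p Phi)^* * inner xi2p Phi = 1.
  have := iso_inner Phi Phi (WU 0).2; rewrite HPhi W0 innerE Wc_v0 Wc_v1.
  by rewrite (un_sq _ (ua 0)) (un_sq _ (ub 0)).
have [al [F1 [al0 [uF1 [Ephi1 Hphi1]]]]] := phase_dec (inner xi1p Phi).
have [be [F2 [be0 [uF2 [Ephi2 Hphi2]]]]] := phase_dec (inner xi2p Phi).
have [Hal Hbe] : (0 <= al <= 1)%R /\ sqrt1m al = be by apply: mod_pair => //; rewrite -Hphi1 -Hphi2.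
have [l' Hl'] := arg_exists (un_inv (un_mul (ua 0) uF1)).
have [t Ht] := arg_exists (un_mul (un_mul (un_expi l') (ub 0)) uF2).
exists rp, rm, al, s1, s2, t; do 3 (split => //).
exists lam, l', W; split; first by move=> n; have [H1 H2] := WU n.
split.
  by move=> n m; rewrite HU; apply: KE.
rewrite W0 /Phi_at; apply: vecP2; rewrite scaleE ?Wc_v0 ?Wc_v1 ?comb0 ?comb1.
  by rewrite Hl' Ephi1; field; rewrite (un_neq0 uF1) (un_neq0 (ua 0)).
by rewrite Ht Ephi2 Hbe; field.
Qed.



Lemma ketbra_apply (x y w : vec) : ketbra x y *m w = inner y w *: x.
Proof.
apply: vecP2; rewrite mulE2 !ketbraE scaleE innerE; ring.
Qed.

Lemma innerC (c d c' d' : CC) : inner (c *: e1 + d *: e2) (c' *: e1 + d' *: e2) = c^* * c' + d^* * d'.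
Proof. by rewrite innerE !comb0 !comb1. Qed.

Lemma sq_r (r : R) : (0 <= r <= 1)%R -> RtoC r * RtoC r + RtoC (sqrt1m r) * RtoC (sqrt1m r) = 1.
Proof.
move=> Hr; rewrite -!RtoCM -RtoCD -RtoC1; congr RtoC.
have H : (r * r + sqrt (1 - r * r) * sqrt (1 - r * r) = 1)%R.
  rewrite sqrt_sqrt; nra.
exact: H.
Qed.

Lemma un_sqN (x : CC) : (- x)^* * (- x) = x^* * x.
Proof. by rewrite rmorphN /= mulrNN. Qed.

Lemma un_sq' (c x : CC) : un c -> (c * x)^* * (c * x) = x^* * x.
Proof. exact: un_sq. Qed.

Lemma Uzeta1_unit rp rm s2 m : (0 <= rp <= 1)%R -> (0 <= rm <= 1)%R ->
  inner (Uzeta1 rp rm s2 m) (Uzeta1 rp rm s2 m) = 1.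
Proof.
move=> Hp Hm; rewrite /Uzeta1; case: ifP => _; rewrite innerC ?(un_sq _ (un_expi _)) !cjR; exact: sq_r.
Qed.

Lemma Uzeta2_unit rp rm s1 s2 m : (0 <= rp <= 1)%R -> (0 <= rm <= 1)%R ->
  inner (Uzeta2 rp rm s1 s2 m) (Uzeta2 rp rm s1 s2 m) = 1.
Proof.
move=> Hp Hm; rewrite /Uzeta2; case: ifP => _; rewrite innerC un_sqN ?(un_sq _ (un_expi _)) !cjR addrC; exact: sq_r.
Qed.


Lemma diag_e1 (V : 'M[CC]_2) : V ord_max ord0 = 0 -> V *m e1 = V ord0 ord0 *: e1.
Proof. by move=> H; apply: vecP2; rewrite mulE2 scaleE e1E0 e1E1 ?H; ring. Qed.
Lemma diag_e2 (V : 'M[CC]_2) : V ord0 ord_max = 0 -> V *m e2 = V ord_max ord_max *: e2.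
Proof. by move=> H; apply: vecP2; rewrite mulE2 scaleE e2E0 e2E1 ?H; ring. Qed.
Lemma diag_v0 (V : 'M[CC]_2) (z : vec) : V ord0 ord_max = 0 -> (V *m z) ord0 ord0 = V ord0 ord0 * z ord0 ord0.
Proof. by move=> H; rewrite mulE2 H mul0r addr0. Qed.
Lemma diag_v1 (V : 'M[CC]_2) (z : vec) : V ord_max ord0 = 0 -> (V *m z) ord_max ord0 = V ord_max ord_max * z ord_max ord0.
Proof. by move=> H; rewrite mulE2 H mul0r add0r. Qed.

Lemma ketbra_inj1 (y z : vec) : ketbra e1 y = ketbra e1 z -> y = z.
Proof.
move=> H; have H0 := congr1 (fun M : 'M[CC]_2 => M ord0 ord0) H; have H1 := congr1 (fun M : 'M[CC]_2 => M ord0 ord_max) H.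
move: H0 H1; rewrite /= !ketbraE e1E0 !mul1r => H0 H1.
by apply: vecP2; apply: (can_inj conjCK).
Qed.
Lemma ketbra_inj2 (y z : vec) : ketbra e2 y = ketbra e2 z -> y = z.
Proof.
move=> H; have H0 := congr1 (fun M : 'M[CC]_2 => M ord_max ord0) H; have H1 := congr1 (fun M : 'M[CC]_2 => M ord_max ord_max) H.
move: H0 H1; rewrite /= !ketbraE e2E1 !mul1r => H0 H1.
by apply: vecP2; apply: (can_inj conjCK).
Qed.

Lemma blk1 (rho : CC) (V1 V2 : 'M[CC]_2) (z z' : vec) :
  V1 ord_max ord0 = 0 -> V2 ord_max ord0 = 0 -> V2 ord0 ord_max = 0 ->
  rho *: (V1 *m ketbra e1 z *m adjm V2) = ketbra e1 z' ->
  (rho * V1 ord0 ord0)^* * (V2 ord0 ord0 * z ord0 ord0) = z' ord0 ord0 /\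
  (rho * V1 ord0 ord0)^* * (V2 ord_max ord_max * z ord_max ord0) = z' ord_max ord0.
Proof.
move=> H1 H2 H3; rewrite ketbra_conj diag_e1 // scale_ketbra scalerA ketbraZl => /ketbra_inj1 <-.
by rewrite !scaleE diag_v0 // diag_v1.
Qed.

Lemma blk2 (rho : CC) (V1 V2 : 'M[CC]_2) (z z' : vec) :
  V1 ord0 ord_max = 0 -> V2 ord_max ord0 = 0 -> V2 ord0 ord_max = 0 ->
  rho *: (V1 *m ketbra e2 z *m adjm V2) = ketbra e2 z' ->
  (rho * V1 ord_max ord_max)^* * (V2 ord0 ord0 * z ord0 ord0) = z' ord0 ord0 /\
  (rho * V1 ord_max ord_max)^* * (V2 ord_max ord_max * z ord_max ord0) = z' ord_max ord0.
Proof.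
move=> H1 H2 H3; rewrite ketbra_conj diag_e2 // scale_ketbra scalerA ketbraZl => /ketbra_inj2 <-.
by rewrite !scaleE diag_v0 // diag_v1.
Qed.

Lemma diag_from (W : int -> 'M[CC]_2) (rho : CC) (rp rm s1 s2 rp' rm' s1' s2' : R) :
  (0 <= rp <= 1)%R -> (0 <= rm <= 1)%R -> un rho ->
  (forall n, adjm (W n) *m W n = 1%:M /\ W n *m adjm (W n) = 1%:M) ->
  (forall n m, rho *: (W n *m U_rs rp rm s1 s2 n m *m adjm (W m)) = U_rs rp' rm' s1' s2' n m) ->
  forall n, W n ord_max ord0 = 0 /\ W n ord0 ord_max = 0.
Proof.
move=> Hp Hm ur HW HK n; have nr := un_neq0 ur; split.
- have := HK n (n + 1); rewrite /U_rs addrK eqxx.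
  have -> : (n == n + 1 + 1) = false by lia.
  rewrite /= !addr0 ketbra_conj => E.
  have := congr1 (fun M : 'M[CC]_2 => (M *m (W (n + 1) *m Uzeta1 rp rm s2 (n + 1))) ord_max ord0) E.
  rewrite /= -scalemxAl !ketbra_apply iso_inner ?(HW _).1 // Uzeta1_unit // scale1r !scaleE e1E1 mulr0.
  rewrite mulE2 e1E0 e1E1 mulr1 mulr0 addr0 => /eqP; rewrite mulf_eq0 (negbTE nr) /=; exact/eqP.
- have := HK n (n - 1); rewrite /U_rs subrK eqxx.
  have -> : (n == n - 1 - 1) = false by lia.
  rewrite /= !add0r ketbra_conj => E.
  have := congr1 (fun M : 'M[CC]_2 => (M *m (W (n - 1) *m Uzeta2 rp rm s1 s2 (n - 1))) ord0 ord0) E.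
  rewrite /= -scalemxAl !ketbra_apply iso_inner ?(HW _).1 // Uzeta2_unit // scale1r !scaleE e2E0 mulr0.
  rewrite mulE2 e2E0 e2E1 mulr1 mulr0 add0r => /eqP; rewrite mulf_eq0 (negbTE nr) /=; exact/eqP.
Qed.

Lemma Urs_lo rp rm s1 s2 (m : int) : U_rs rp rm s1 s2 (m - 1) m = ketbra e1 (Uzeta1 rp rm s2 m).
Proof.
rewrite /U_rs eqxx.
have -> : (m - 1 == m + 1) = false by lia.
by rewrite /= addr0.
Qed.

Lemma Urs_hi rp rm s1 s2 (m : int) : U_rs rp rm s1 s2 (m + 1) m = ketbra e2 (Uzeta2 rp rm s1 s2 m).
Proof.
rewrite /U_rs eqxx.
have -> : (m + 1 == m - 1) = false by lia.
by rewrite /= add0r.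
Qed.

Lemma eq_by (F L R' gl gr : CC) : L = R' -> gl - gr = F * (L - R') -> gl = gr.
Proof. by move=> H E; apply/eqP; rewrite -subr_eq0 E H subrr mulr0. Qed.

Lemma unit_real (c : CC) (r r' : R) : un c -> (0 < r)%R -> (0 < r')%R -> c * RtoC r = RtoC r' ->
  r = r' /\ c = 1.
Proof.
move=> uc r0 r0' H.
have H2 : RtoC (r * r) = RtoC (r' * r').
  by rewrite !RtoCM -{1}(cjR r) -(un_sq _ uc) H cjR.
have Err : (r * r = r' * r')%R by exact: RtoC_inj H2.
have E : r = r' by nra.
split => //; move: H; rewrite -E => H.
have nz : RtoC r != 0 by apply/eqP; rewrite -RtoC0 => /RtoC_inj Hr; rewrite Hr in r0; exact: (Rlt_irrefl _ r0).
by apply: (mulIf nz); rewrite mul1r.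
Qed.

Lemma sqrt1m_pos r : (0 < r < 1)%R -> (0 < sqrt1m r)%R.
Proof. move=> H; rewrite /sqrt1m; apply: sqrt_lt_R0; nra. Qed.

Lemma part2_fwd (rp rm s1 s2 a t rp' rm' s1' s2' a' t' : R) :
     (0 < rp < 1)%R -> (0 < rm < 1)%R -> (0 < rp' < 1)%R -> (0 < rm' < 1)%R ->
     (0 < a < 1)%R -> (0 < a' < 1)%R ->
     (0 <= s1 < 2 * PI)%R -> (0 <= s2 < 2 * PI)%R -> (0 <= t < 2 * PI)%R ->
     (0 <= s1' < 2 * PI)%R -> (0 <= s2' < 2 * PI)%R -> (0 <= t' < 2 * PI)%R ->
     unitary_equiv (U_rs rp rm s1 s2) (Phi_at a t) (U_rs rp' rm' s1' s2') (Phi_at a' t') ->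
     rp = rp' /\ rm = rm' /\ s1 = s1' /\ s2 = s2' /\ a = a' /\ t = t'.
Proof.
move=> Hrp Hrm Hrp' Hrm' Ha Ha' Hs1 Hs2 Ht Hs1' Hs2' Ht' [l [l' [W [HW [HK HP]]]]].
set rho := expi l in HK; have ur : un rho := un_expi l.
have [Hp Hm] : (0 <= rp <= 1)%R /\ (0 <= rm <= 1)%R by lra.
have D := diag_from Hp Hm ur HW HK.
pose al n := W n ord0 ord0; pose be n := W n ord_max ord_max.
have ual : forall n, un (al n).
  move=> n; have := congr1 (fun M : 'M[CC]_2 => M ord0 ord0) (HW n).1.
  by rewrite /= mulE2 !adjmE (D n).1 mulr0 addr0 mxE /= mulrC.
have ube : forall n, un (be n).
  move=> n; have := congr1 (fun M : 'M[CC]_2 => M ord_max ord_max) (HW n).1.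
  by rewrite /= mulE2 !adjmE (D n).2 mulr0 add0r mxE /= mulrC.
have B1 : forall m, (rho * al (m - 1))^* * (al m * Uzeta1 rp rm s2 m ord0 ord0) = Uzeta1 rp' rm' s2' m ord0 ord0 /\
    (rho * al (m - 1))^* * (be m * Uzeta1 rp rm s2 m ord_max ord0) = Uzeta1 rp' rm' s2' m ord_max ord0.
  move=> m; apply: blk1; [exact: (D _).1 | exact: (D _).1 | exact: (D _).2 |].
  by have := HK (m - 1) m; rewrite !Urs_lo.
have B2 : forall m, (rho * be (m + 1))^* * (al m * Uzeta2 rp rm s1 s2 m ord0 ord0) = Uzeta2 rp' rm' s1' s2' m ord0 ord0 /\
    (rho * be (m + 1))^* * (be m * Uzeta2 rp rm s1 s2 m ord_max ord0) = Uzeta2 rp' rm' s1' s2' m ord_max ord0.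
  move=> m; apply: blk2; [exact: (D _).2 | exact: (D _).1 | exact: (D _).2 |].
  by have := HK (m + 1) m; rewrite !Urs_hi.
have [E1a E1b] := B1 0; have [E2a E2b] := B1 1; have [E3a E3b] := B1 (-1).
have [F1a F1b] := B2 0; have [F2a F2b] := B2 (-1); have [F3a F3b] := B2 (-2).
move: E1a E1b E2a E2b E3a E3b F1a F1b F2a F2b F3a F3b.
rewrite /Uzeta1 /Uzeta2 /= !comb0 !comb1.
have -> : (0 - 1 = -1 :> int) by []. have -> : (1 - 1 = 0 :> int) by [].
have -> : (-1 - 1 = -2 :> int) by []. have -> : (0 + 1 = 1 :> int) by [].
have -> : (-1 + 1 = 0 :> int) by []. have -> : (-2 + 1 = -1 :> int) by [].
rewrite !(un_conj (un_mul ur (ual _))) !(un_conj (un_mul ur (ube _))).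
have HP0 := congr1 (fun v : vec => v ord0 ord0) HP.
have HP1 := congr1 (fun v : vec => v ord_max ord0) HP.
move: HP0 HP1; rewrite /= /Phi_at !scaleE diag_v0 ?(D 0).2 // diag_v1 ?(D 0).1 // !comb0 !comb1.
have nzr := un_neq0 ur.
have nza : forall n, al n != 0 := fun n => un_neq0 (ual n).
have nzb : forall n, be n != 0 := fun n => un_neq0 (ube n).
have sp0 := sqrt1m_pos Hrp; have sm0 := sqrt1m_pos Hrm.
have sp0' := sqrt1m_pos Hrp'; have sm0' := sqrt1m_pos Hrm'.
have sa0 := sqrt1m_pos Ha; have sa0' := sqrt1m_pos Ha'.
have [a0 a0'] : (0 < a)%R /\ (0 < a')%R by lra.
have [rp0 rp0'] : (0 < rp)%R /\ (0 < rp')%R by lra.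
have [rm0 rm0'] : (0 < rm)%R /\ (0 < rm')%R by lra.
clear B1 B2 D HK HW.
set A0 := al 0; set A1 := al (-1); set A2 := al (-2); set B0 := be 0; set B1 := be 1; set Bm := be (-1).
move=> P0 P1 E1a E1b E2a E2b E3a E3b F1a F1b F2a F2b F3a F3b.
change (W 0 ord0 ord0) with A0 in P0; change (W 0 ord_max ord_max) with B0 in P1.
have uA0 : un A0 := ual 0. have uA1 : un A1 := ual (-1). have uA2 : un A2 := ual (-2).
have uB0 : un B0 := ube 0. have uB1 : un B1 := ube 1. have uBm : un Bm := ube (-1).
have nA0 := nza 0; have nA1 := nza (-1); have nA2 := nza (-2).
have nB0 := nzb 0; have nB1 := nzb 1; have nBm := nzb (-1).
rewrite mulrA in E1a; have [Erp cA] := unit_real (un_mul (un_inv (un_mul ur uA1)) uA0) rp0 rp0' E1a.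
rewrite mulrA in E1b; have [_ cB] := unit_real (un_mul (un_inv (un_mul ur uA1)) uB0) sp0 sp0' E1b.
rewrite mulrA in E2b; have [_ cB1] := unit_real (un_mul (un_inv (un_mul ur uA0)) uB1) sp0 sp0' E2b.
rewrite mulrA in E3a; have [Erm cA1] := unit_real (un_mul (un_inv (un_mul ur uA2)) uA1) rm0 rm0' E3a.
rewrite mulrA mulrN in F2a; move/oppr_inj: F2a => F2a.
have [_ cA1'] := unit_real (un_mul (un_inv (un_mul ur uB0)) uA1) sm0 sm0' F2a.
rewrite mulrA mulrN in F3a; move/oppr_inj: F3a => F3a.
have [_ cA2] := unit_real (un_mul (un_inv (un_mul ur uBm)) uA2) sm0 sm0' F3a.
rewrite mulrA in P0; have [Ea cP] := unit_real (un_mul (un_expi l') uA0) a0 a0' P0.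
subst rp' rm' a'.
have HA0 : A0 = rho * A1 by apply: (eq_by (F := rho * A1) cA); field; rewrite nzr nA1.
have HB0 : B0 = rho * A1 by apply: (eq_by (F := rho * A1) cB); field; rewrite nzr nA1.
have HB1 : B1 = rho * A0 by apply: (eq_by (F := rho * A0) cB1); field; rewrite nzr nA0.
have HA1 : A1 = rho * B0 by apply: (eq_by (F := rho * B0) cA1'); field; rewrite nzr nB0.
have HA2 : A2 = rho * Bm by apply: (eq_by (F := rho * Bm) cA2); field; rewrite nzr nBm.
have Hrr : rho * rho = 1.
  apply: (eq_by (F := - A1^-1) HA1); rewrite HB0; field; exact: nA1.
have nS : forall s : R, (0 < s)%R -> RtoC s != 0.
  by move=> s0 Hs0; apply/eqP; rewrite -RtoC0 => /RtoC_inj Hr; rewrite Hr in Hs0; exact: (Rlt_irrefl _ Hs0).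
rewrite mulrA mulrN in F1a; move/oppr_inj: F1a; rewrite !mulrA => /(mulIf (nS _ sp0)) H7.
rewrite !mulrA in E3b; move/(mulIf (nS _ sm0)): E3b => H8.
rewrite !mulrA in P1; move/(mulIf (nS _ sa0)): P1 => H9.
have ES1 : expi s1 = expi s1'.
  rewrite -H7 HB1; apply: (eq_by (F := expi s1 / (rho * rho)) Hrr); field; by rewrite nzr nA0.
have ES2 : expi s2 = expi s2'.
  rewrite -H8 HA2; apply: (eq_by (F := expi s2 / (rho * rho)) Hrr); field; by rewrite nzr nBm.
have ET : expi t = expi t'.
  rewrite -H9 HB0 -HA0; apply: (eq_by (F := - expi t) cP); ring.
do 2 (split => //); split; first exact: expi_inj ES1.
split; first exact: expi_inj ES2.
split => //; exact: expi_inj ET.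
Qed.


Lemma expi0 : expi 0 = 1.
Proof. by rewrite /expi cos_0 sin_0. Qed.

Lemma adjm1 : adjm (1%:M : 'M[CC]_2) = 1%:M.
Proof. by apply/matrixP => i j; rewrite adjmE !mxE eq_sym rmorph_nat. Qed.

Lemma equiv_refl (U : kernel) (Phi : vec) : unitary_equiv U Phi U Phi.
Proof.
exists 0%R, 0%R, (fun _ => 1%:M); split; first by move=> n; rewrite adjm1 mul1mx.
split; first by move=> n m; rewrite adjm1 mulmx1 mul1mx expi0 scale1r.
by rewrite expi0 mul1mx scale1r.
Qed.


Local Close Scope ring_scope.

Theorem theorem3p5 :
  (forall (U : kernel) (Phi : vec),
     complete_two_phase U -> initial_state Phi ->
     exists rp rm a s1 s2 t : R,
       (0 <= rp <= 1)%R /\ (0 <= rm <= 1)%R /\ (0 <= a <= 1)%R /\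
       unitary_equiv U Phi (U_rs rp rm s1 s2) (Phi_at a t))
  /\
  (forall rp rm s1 s2 a t rp' rm' s1' s2' a' t' : R,
     (0 < rp < 1)%R -> (0 < rm < 1)%R -> (0 < rp' < 1)%R -> (0 < rm' < 1)%R ->
     (0 < a < 1)%R -> (0 < a' < 1)%R ->
     (0 <= s1 < 2 * PI)%R -> (0 <= s2 < 2 * PI)%R -> (0 <= t < 2 * PI)%R ->
     (0 <= s1' < 2 * PI)%R -> (0 <= s2' < 2 * PI)%R -> (0 <= t' < 2 * PI)%R ->
     (unitary_equiv (U_rs rp rm s1 s2) (Phi_at a t) (U_rs rp' rm' s1' s2') (Phi_at a' t')
      <-> rp = rp' /\ rm = rm' /\ s1 = s1' /\ s2 = s2' /\ a = a' /\ t = t')).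
Proof.
split; first exact: part1.
move=> rp rm s1 s2 a t rp' rm' s1' s2' a' t' H1 H2 H3 H4 H5 H6 H7 H8 H9 H10 H11 H12; split.
  exact: part2_fwd.
by move=> [-> [-> [-> [-> [-> ->]]]]]; apply: equiv_refl.
Qed.
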